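(* Let $R$ be a perfect $\overline{\mathbb{F}}_p$-algebra which is radically closed (every polynomial $x^n - a \in R[x]$ splits into linear factors), and let $S$ be a commutative ring equipped with an isomorphism of multiplicative monoids $(R,\cdot) \cong (S, \cdot)$. Then $S$ has characteristic $p$. *)

(* Defs.v *)
From HB Require Import structures.
From mathcomp Require Import all_boot all_order all_algebra.
Set Implicit Arguments. Unset Strict Implicit. Unset Printing Implicit Defensive.
Import Order.TTheory GRing.Theory Num.Theory.
Local Open Scope ring_scope.

Definition is_alg_closure_Fp (p : nat) (K : closedFieldType) : Prop :=
  prime p /\ p \in [pchar K] /\
  forall x : K, exists q : {poly K},
    [/\ q != 0, (forall i, exists n : nat, q`_i = n%:R) & root q x].

Definition perfect_ring (p : nat) (R : comNzRingType) : Prop :=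
  bijective (fun x : R => x ^+ p).

Definition radically_closed (R : comNzRingType) : Prop :=
  forall (n : nat) (a : R), (0 < n)%N ->
    exists s : seq R, 'X^n - a%:P = \prod_(r <- s) ('X - r%:P).

Definition mul_monoid_iso (R S : comNzRingType) (f : R -> S) : Prop :=
  [/\ bijective f, f 1 = 1 & forall x y, f (x * y) = f x * f y].

(* Main.v *)
Require Import Defs.
From HB Require Import structures.
From mathcomp Require Import all_boot all_order all_algebra.
From mathcomp Require Import zify ring lra.
Import GRing.Theory.
Local Open Scope ring_scope.
Module MA.
Set Implicit Arguments. Unset Strict Implicit. Unset Printing Implicit Defensive.

Section Cong.
Variable (S : comNzRingType) (p : nat).
Hypothesis p_gt1 : (1 < p)%N.

Definition Phi : {poly S} := \sum_(i < p) 'X^i.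
Definition cong (P Q : {poly S}) := exists H, P - Q = H * Phi.
Local Notation "P === Q" := (cong P Q) (at level 70).

Lemma congR P : P === P.
Proof. by exists 0; rewrite subrr mul0r. Qed.
Lemma congS P Q : P === Q -> Q === P.
Proof. by case=> H e; exists (- H); rewrite mulNr -e opprB. Qed.
Lemma congT P Q U : P === Q -> Q === U -> P === U.
Proof.
by case=> H1 e1 [H2 e2]; exists (H1 + H2); rewrite mulrDl -e1 -e2 addrA subrK.
Qed.
Lemma congD P1 Q1 P2 Q2 : P1 === Q1 -> P2 === Q2 -> P1 + P2 === Q1 + Q2.
Proof.
case=> H1 e1 [H2 e2]; exists (H1 + H2); rewrite mulrDl -e1 -e2.
by rewrite opprD addrACA.
Qed.
Lemma congN P Q : P === Q -> - P === - Q.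
Proof. by case=> H e; exists (- H); rewrite mulNr -e opprB opprK addrC. Qed.
Lemma congB P1 Q1 P2 Q2 : P1 === Q1 -> P2 === Q2 -> P1 - P2 === Q1 - Q2.
Proof. by move=> h1 h2; apply: congD => //; apply: congN. Qed.
Lemma congM P1 Q1 P2 Q2 : P1 === Q1 -> P2 === Q2 -> P1 * P2 === Q1 * Q2.
Proof.
case=> H1 e1 [H2 e2]; exists (H1 * P2 + Q1 * H2).
have -> : P1 * P2 - Q1 * Q2 = (P1 - Q1) * P2 + Q1 * (P2 - Q2).
  by rewrite mulrBl mulrBr addrA subrK.
by rewrite e1 e2 mulrDl mulrAC mulrA.
Qed.
Lemma congMl U P Q : P === Q -> U * P === U * Q.
Proof. by move=> h; apply: congM => //; apply: congR. Qed.
Lemma congMr U P Q : P === Q -> P * U === Q * U.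
Proof. by move=> h; apply: congM => //; apply: congR. Qed.
Lemma congX P Q n : P === Q -> P ^+ n === Q ^+ n.
Proof.
move=> h; elim: n => [|n IH]; first by rewrite !expr0; apply: congR.
by rewrite !exprS; apply: congM.
Qed.
Lemma congE P Q : P = Q -> P === Q.
Proof. by move->; apply: congR. Qed.
Lemma congMphi H : H * Phi === 0.
Proof. by exists H; rewrite subr0. Qed.

Lemma cong_sum (I : Type) (r : seq I) (P : pred I) (F G : I -> {poly S}) :
  (forall i, P i -> F i === G i) ->
  \sum_(i <- r | P i) F i === \sum_(i <- r | P i) G i.
Proof.
move=> h; apply: (big_ind2 cong); first exact: congR.
  by move=> *; apply: congD.
exact: h.
Qed.
Lemma cong_prod (I : Type) (r : seq I) (P : pred I) (F G : I -> {poly S}) :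
  (forall i, P i -> F i === G i) ->
  \prod_(i <- r | P i) F i === \prod_(i <- r | P i) G i.
Proof.
move=> h; apply: (big_ind2 cong); first exact: congR.
  by move=> *; apply: congM.
exact: h.
Qed.

Lemma Xn_sub1 n : ('X - 1) * \sum_(i < n) 'X^i = 'X^n - 1 :> {poly S}.
Proof.
elim: n => [|n IH]; first by rewrite big_ord0 mulr0 expr0 subrr.
rewrite big_ord_recr /= mulrDr IH mulrBl -exprS mul1r.
by rewrite addrC addrA subrK.
Qed.

Lemma Xp1 : 'X^p === 1.
Proof. by exists ('X - 1); rewrite -Xn_sub1. Qed.

Lemma Xmod n : ('X^n : {poly S}) === 'X^(n %% p).
Proof.
rewrite {1}(divn_eq n p) exprD mulnC exprM.
apply: (@congT _ (1 * 'X^(n %% p))); last by rewrite mul1r; apply: congR.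
apply: congMr.
by rewrite -(expr1n _ (n %/ p)); apply: congX; apply: Xp1.
Qed.

Lemma Phi_poly : Phi = \poly_(i < p) 1.
Proof. by rewrite poly_def /Phi; apply: eq_bigr => i _; rewrite scale1r. Qed.

Lemma size_Phi : size Phi = p.
Proof. by rewrite Phi_poly size_poly_eq // oner_neq0. Qed.

Lemma monic_Phi : Phi \is monic.
Proof.
apply/monicP; rewrite /lead_coef size_Phi Phi_poly coef_poly.
by case: p p_gt1 => // n _; rewrite leqnn.
Qed.

Lemma cong_const0 c : c%:P === 0 -> c = 0.
Proof.
case=> H; rewrite subr0 => e.
have [H0|Hn] := eqVneq H 0.
  by move: e; rewrite H0 mul0r => /polyP/(_ 0%N); rewrite coefC coef0.
have := size_Mmonic Hn monic_Phi; rewrite -e size_Phi.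
have := size_polyC_leq1 c.
have : (0 < size H)%N by rewrite size_poly_gt0.
move=> h1 h2 h3; exfalso; move: h2; rewrite h3.
move: h1 p_gt1; case: (size H) => // m _.
move=> _ h; lia.
Qed.

End Cong.

End MA.
Import MA.

Module MB.
Set Implicit Arguments. Unset Strict Implicit. Unset Printing Implicit Defensive.

Section CongP.
Variable (S : comNzRingType) (p : nat).
Hypothesis p_pr : prime p.
Let p_gt1 : (1 < p)%N. Proof. exact: prime_gt1. Qed.
Let p_gt0 : (0 < p)%N. Proof. exact: prime_gt0. Qed.
Local Notation "P === Q" := (cong p P Q) (at level 70).
Local Notation Phi := (Phi S p).

Definition hmul (b : nat) (a : 'I_p) : 'I_p := Ordinal (ltn_pmod (a * b) p_gt0).

Lemma hmul_inj b : ~~ (p %| b)%N -> injective (hmul b).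
Proof.
move=> nb a1 a2 /(congr1 val) /= e.
apply: val_inj => /=.
have key : forall x y : 'I_p, (y <= x)%N -> (x * b = y * b %[mod p])%N -> x = y :> nat.
  move=> x y le e1; apply/eqP; rewrite eqn_leq le andbT.
  move/eqP: e1; rewrite eqn_mod_dvd ?leq_mul2r ?le ?orbT // -mulnBl.
  rewrite Euclid_dvdM // (negPf nb) orbF => dv.
  have lt : (x - y < p)%N by apply: leq_ltn_trans (leq_subr _ _) (ltn_ord x).
  have [z|nz] := eqVneq (x - y)%N 0%N; first by rewrite -subn_eq0 z.
  by move: dv; rewrite gtnNdvd // lt0n.
have [le|le] := leqP a2 a1; first exact: key.
by apply/esym/key => //; apply: ltnW.
Qed.

Lemma hmul_pos b (a : 'I_p) : ~~ (p %| b)%N -> (0 < hmul b a)%N = (0 < a)%N.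
Proof.
move=> nb; rewrite /= !lt0n; congr negb.
have -> : ((a * b) %% p == 0)%N = (p %| a * b)%N by [].
rewrite Euclid_dvdM // (negPf nb) orbF.
have [->|nz] := eqVneq (nat_of_ord a) 0%N; first by rewrite dvdn0.
by rewrite gtnNdvd // lt0n.
Qed.

Lemma reindex_pos (V : nmodType) b (F : 'I_p -> V) : ~~ (p %| b)%N ->
  \sum_(a < p | (0 < a)%N) F (hmul b a) = \sum_(a < p | (0 < a)%N) F a.
Proof.
move=> nb; rewrite [RHS](reindex_inj (hmul_inj nb)) /=.
by apply: eq_bigl => a; rewrite hmul_pos.
Qed.

Lemma reindex_all (V : nmodType) b (F : 'I_p -> V) : ~~ (p %| b)%N ->
  \sum_(a < p) F (hmul b a) = \sum_(a < p) F a.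
Proof. by move=> nb; rewrite [RHS](reindex_inj (hmul_inj nb)). Qed.

Lemma Phi_ord : Phi = \sum_(a < p) 'X^a.
Proof. by []. Qed.

Lemma sum_pos_X : \sum_(a < p | (0 < a)%N) ('X^a : {poly S}) === - 1.
Proof.
have e : Phi = 1 + \sum_(a < p | (0 < a)%N) 'X^a.
  rewrite /MA.Phi (bigD1 (Ordinal p_gt0)) //= expr0; congr (_ + _).
  by apply: eq_bigl => a; rewrite lt0n; congr negb; apply/eqP/eqP => [/(congr1 val)|/val_inj].
have : \sum_(a < p | (0 < a)%N) 'X^a === Phi - 1 by rewrite e [1 + _]addrC addrK; apply: congR.
move/congT; apply; rewrite -[X in _ === X]add0r; apply: congB.
  by rewrite -[Phi]mul1r; apply: congMphi.
exact: congR.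
Qed.

Lemma sigma_Phi b : ~~ (p %| b)%N -> Phi \Po 'X^b === 0.
Proof.
move=> nb; rewrite /MA.Phi rmorph_sum /=.
apply: (@congT _ _ _ (\sum_(a < p) 'X^(hmul b a))).
  apply: cong_sum => a _; rewrite comp_Xn_poly -exprM mulnC /=; exact: Xmod.
rewrite (reindex_all (fun a => 'X^a) nb).
by have := congMphi p (1 : {poly S}); rewrite mul1r.
Qed.

Lemma sigma_cong b (P Q : {poly S}) : ~~ (p %| b)%N -> P === Q -> P \Po 'X^b === Q \Po 'X^b.
Proof.
move=> nb [H e].
case: (sigma_Phi nb) => H' e'; rewrite subr0 in e'.
exists ((H \Po 'X^b) * H').
by rewrite -linearB /= e comp_polyM e' mulrA.
Qed.


Lemma small_cong0 (V : {poly S}) : (size V < p)%N -> V === 0 -> V = 0.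
Proof.
move=> sz [H]; rewrite subr0 => e.
have [H0|Hn] := eqVneq H 0; first by rewrite e H0 mul0r.
have := size_Mmonic Hn (@monic_Phi S p p_gt1); rewrite -e (size_Phi S p).
have : (0 < size H)%N by rewrite size_poly_gt0.
move=> h1 h2; exfalso; move: sz; rewrite h2; lia.
Qed.

Lemma basis_uniq (u : 'I_p -> S) :
  \sum_(a < p | (0 < a)%N) u a *: 'X^a === 0 ->
  forall a : 'I_p, (0 < a)%N -> u a = 0.
Proof.
move=> h.
pose V := \sum_(a < p | (0 < a)%N) u a *: ('X^(a.-1) : {poly S}).
have eV : V * 'X^p = (\sum_(a < p | (0 < a)%N) u a *: 'X^a) * 'X^(p.-1).
  rewrite !mulr_suml; apply: eq_bigr => a a0.
  rewrite -!scalerAl -!exprD.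
  have -> : (a.-1 + p = a + p.-1)%N by move: a0 p_gt1; lia.
  by [].
have cV : V === 0.
  apply: (@congT _ _ _ (V * 'X^p)).
    apply: (@congT _ _ _ (V * 1)); first by rewrite mulr1; apply: congR.
    apply: congMl; apply: congS; exact: Xp1.
  rewrite eV; apply: (@congT _ _ _ (0 * 'X^(p.-1))); first by apply: congMr.
  by rewrite mul0r; apply: congR.
have V0 : V = 0.
  apply: small_cong0 cV; apply: (@leq_ltn_trans p.-1); last by lia.
  apply/leq_sizeP => j hj; rewrite coef_sumMXn big1 // => a /andP[a0 /eqP e].
  by exfalso; move: (ltn_ord a); lia.
move=> a a0; have := congr1 (fun P : {poly S} => P`_(a.-1)) V0.
rewrite /= coef0 coef_sumMXn (big_pred1 a) // => b /=.
apply/andP/eqP => [[b0 /eqP e]|->]; last by split.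
apply: val_inj => /=; move: e a0 b0; lia.
Qed.

Definition isform (P : {poly S}) :=
  exists r : 'I_p -> S, P === \sum_(a < p | (0 < a)%N) r a *: 'X^a.

Lemma isform0 : isform 0.
Proof. by exists (fun _ => 0); rewrite big1; [apply: congR | move=> i _; rewrite scale0r]. Qed.

Lemma isformD P Q : isform P -> isform Q -> isform (P + Q).
Proof.
case=> r1 h1 [r2 h2]; exists (fun a => r1 a + r2 a).
under eq_bigr do rewrite scalerDl.
by rewrite big_split /=; apply: congD.
Qed.

Lemma isformZ c P : isform P -> isform (c *: P).
Proof.
case=> r h; exists (fun a => c * r a).
under eq_bigr do rewrite -scalerA.
rewrite -scaler_sumr -!mul_polyC; exact: congMl.
Qed.

Lemma isform_cong P Q : P === Q -> isform Q -> isform P.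
Proof. by move=> h [r h']; exists r; apply: congT h h'. Qed.

Lemma isformX n : isform 'X^n.
Proof.
apply: (@isform_cong _ ('X^(n %% p))); first exact: Xmod.
have [e|nz] := eqVneq (n %% p)%N 0%N.
  rewrite e expr0; exists (fun _ => -1).
  under eq_bigr do rewrite scaleN1r.
  rewrite sumrN; apply: congS; apply: (@congT _ _ _ (- - 1)).
    by apply: congN; apply: sum_pos_X.
  by rewrite opprK; apply: congR.
exists (fun a => if nat_of_ord a == (n %% p)%N then 1 else 0).
rewrite (bigD1 (Ordinal (ltn_pmod n p_gt0))) /=; last by rewrite lt0n.
rewrite eqxx scale1r big1 ?addr0; first exact: congR.
by move=> a /andP[_ ne]; case: eqP => [e|]; rewrite ?scale0r //; case/eqP: ne; apply: val_inj.
Qed.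

Lemma isform_all P : isform P.
Proof.
rewrite -[P]coefK poly_def; apply: big_ind => //; first exact: isform0.
  exact: isformD.
by move=> i _; apply: isformZ; apply: isformX.
Qed.

Lemma invariance P :
  (forall b : nat, ~~ (p %| b)%N -> P \Po 'X^b === P) -> exists s : S, P === s%:P.
Proof.
move=> hinv; case: (isform_all P) => r hr.
pose R := \sum_(a < p | (0 < a)%N) r a *: ('X^a : {poly S}).
have key : forall b : 'I_p, (0 < b)%N -> forall a : 'I_p, (0 < a)%N -> r a = r (hmul b a).
  move=> b b0.
  have nb : ~~ (p %| b)%N by rewrite gtnNdvd.
  have [g hg gh] := injF_bij (hmul_inj nb).
  have e1 : R \Po 'X^b === R.
    apply: congT (sigma_cong nb (congS hr)) _; apply: congT (hinv b nb) hr.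
  have e2 : R \Po 'X^b === \sum_(a < p | (0 < a)%N) r a *: 'X^(hmul b a).
    rewrite linear_sum /=; apply: cong_sum => a _.
    rewrite linearZ /= comp_Xn_poly -exprM mulnC -!mul_polyC; apply: congMl; exact: Xmod.
  have e3 : R = \sum_(a < p | (0 < a)%N) r (hmul b a) *: 'X^(hmul b a).
    by rewrite /R (reindex_pos (fun a => r a *: 'X^a) nb).
  have e4 : \sum_(a < p | (0 < a)%N) (r (g a) - r (hmul b (g a))) *: ('X^a : {poly S}) === 0.
    rewrite -(reindex_pos (fun a => (r (g a) - r (hmul b (g a))) *: ('X^a : {poly S})) nb).
    under eq_bigr do rewrite hg.
    under eq_bigr do rewrite scalerBl.
    rewrite sumrB -e3.
    have hs := congB (congT (congS e2) e1) (@congR _ p R).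
    by rewrite subrr in hs.
  move=> a a0; apply/eqP; rewrite -subr_eq0; apply/eqP.
  have h0 : (0 < hmul b a)%N by rewrite hmul_pos.
  by have := basis_uniq e4 h0; rewrite hg.
have ord1 : (1 < p)%N := p_gt1.
exists (- r (Ordinal ord1)); apply: congT hr _.
have -> : \sum_(a < p | (0 < a)%N) r a *: ('X^a : {poly S}) =
          r (Ordinal ord1) *: \sum_(a < p | (0 < a)%N) 'X^a.
  rewrite scaler_sumr; apply: eq_bigr => a a0; congr (_ *: _).
  rewrite (key a a0 (Ordinal ord1)) //; congr r; apply: val_inj => /=.
  by rewrite mul1n modn_small.
rewrite -mul_polyC.
have -> : (- r (Ordinal ord1))%:P = (r (Ordinal ord1))%:P * (-1) by rewrite polyCN mulrN1.
apply: congMl; exact: sum_pos_X.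
Qed.

End CongP.

End MB.
Import MB.

Module MC.
Set Implicit Arguments. Unset Strict Implicit. Unset Printing Implicit Defensive.

Section Fact.
Variable A : comNzRingType.
Definition nzd (x : A) := forall y, x * y = 0 -> y = 0.

Lemma nzdM x y : nzd x -> nzd y -> nzd (x * y).
Proof. by move=> hx hy z; rewrite -mulrA => /hx /hy. Qed.

Lemma nzd_prod (I : Type) (r : seq I) (P : pred I) (F : I -> A) :
  (forall i, P i -> nzd (F i)) -> nzd (\prod_(i <- r | P i) F i).
Proof.
move=> h; apply: big_ind => //; first by move=> y; rewrite mul1r.
exact: nzdM.
Qed.

Lemma nzd_unit x y : x * y = 1 -> nzd x.
Proof. by move=> e z ez; rewrite -[z]mul1r -e mulrAC ez mul0r. Qed.

Lemma nzd_of_mul x y : nzd (x * y) -> nzd x.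
Proof. by move=> h z e; apply: h; rewrite mulrAC e mul0r. Qed.

Fixpoint good (rs : seq A) : Prop :=
  match rs with
  | [::] => True
  | r :: rs' => (forall r', r' \in rs' -> nzd (r' - r)) /\ good rs'
  end.

Lemma factor_roots (rs : seq A) (P : {poly A}) : good rs ->
  (forall r, r \in rs -> root P r) ->
  exists Q, P = Q * \prod_(r <- rs) ('X - r%:P).
Proof.
elim: rs P => [|r rs IH] P /=.
  by move=> _ _; exists P; rewrite big_nil mulr1.
case=> hn hg hr.
have /factor_theorem [Q1 eQ1] : root P r by apply: hr; rewrite inE eqxx.
have : forall r', r' \in rs -> root Q1 r'.
  move=> r' hr'; apply/rootP; apply: (hn r' hr').
  have := hr r'; rewrite inE hr' orbT => /(_ isT) /rootP.
  by rewrite eQ1 hornerM hornerXsubC mulrC.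
case/(IH Q1 hg) => Q eQ; exists Q.
rewrite eQ1 eQ big_cons -mulrA; congr (_ * _); exact: mulrC.
Qed.

Lemma factor_monic (rs : seq A) (P : {poly A}) : good rs ->
  (forall r, r \in rs -> root P r) -> P \is monic -> size P = (size rs).+1 ->
  P = \prod_(r <- rs) ('X - r%:P).
Proof.
move=> hg hr mP sP; case: (factor_roots hg hr) => Q eQ.
have mM : \prod_(r <- rs) ('X - r%:P) \is monic := monic_prod_XsubC _ _ _.
have Qn : Q != 0 by apply: contraTneq mP => Q0; rewrite eQ Q0 mul0r monicE lead_coef0 eq_sym oner_eq0.
have sQ : size Q = 1%N.
  have := size_Mmonic Qn mM; rewrite -eQ sP size_prod_XsubC; lia.
have eQc : Q = (Q`_0)%:P by apply: size1_polyC; rewrite sQ.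
have lQ : lead_coef Q = 1.
  by have := lead_coef_Mmonic Q mM; rewrite -eQ (monicP mP).
have c0 : Q`_0 = 1 by rewrite -lQ /lead_coef sQ.
have q1 : Q = 1 by rewrite eQc c0.
by rewrite eQ q1 mul1r.
Qed.

End Fact.

End MC.
Import MC.

Module MD.
Set Implicit Arguments. Unset Strict Implicit. Unset Printing Implicit Defensive.

Lemma geom (R : comNzRingType) (x : R) n : (x - 1) * \sum_(i < n) x ^+ i = x ^+ n - 1.
Proof.
elim: n => [|n IH]; first by rewrite big_ord0 mulr0 expr0 subrr.
rewrite big_ord_recr /= mulrDr IH mulrBl -exprS mul1r.
by rewrite addrC addrA subrK.
Qed.

Lemma comp_polyXn_gen (R : comNzRingType) (P Q : {poly R}) n :
  (P ^+ n) \Po Q = (P \Po Q) ^+ n.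
Proof.
elim: n => [|n IH]; first by rewrite !expr0 comp_polyC.
by rewrite !exprS comp_polyM IH.
Qed.

Section Main.
Variables (S : comNzRingType) (p : nat) (chi : nat -> S).
Hypothesis p_pr : prime p.
Hypothesis p_gt2 : (2 < p)%N.
Hypothesis chiM : forall a b, chi (a * b)%N = chi a * chi b.
Hypothesis chi_mod : forall a, chi (a %% p)%N = chi a.
Hypothesis chi1 : chi 1 = 1.
Hypothesis chi_pow : forall a, ~~ (p %| a)%N -> chi a ^+ p.-1 = 1.
Hypothesis chi_nzd : forall a b, (a %% p != b %% p)%N -> nzd (chi a - chi b).
Hypothesis uroot : forall x y : S, x ^+ p = y ^+ p -> x = y.
Hypothesis radical : forall c : S, exists b, b ^+ p.-1 = c.

Let p_gt1 : (1 < p)%N. Proof. exact: prime_gt1. Qed.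
Let p_gt0 : (0 < p)%N. Proof. exact: prime_gt0. Qed.
Local Notation "P === Q" := (cong p P Q) (at level 70).

Lemma reduced (x : S) n : x ^+ n = 0 -> x = 0.
Proof.
elim: n => [|n IH]; first by rewrite expr0 => /eqP; rewrite oner_eq0.
case: n IH => [|n] IH; first by rewrite expr1.
move=> h; apply: IH; apply: uroot; rewrite expr0n /= -exprM.
have -> : (n.+1 * p = n.+2 + (n.+1 * p - n.+2))%N by nia.
by rewrite exprD h mul0r; case: p p_gt0.
Qed.

Lemma chi_inv a : ~~ (p %| a)%N -> chi a ^+ p.-2 * chi a = 1.
Proof.
move=> na; rewrite -exprSr -(chi_pow na); congr (_ ^+ _); lia.
Qed.

Lemma good_map (F : nat -> S) (s : seq nat) :
  (forall a b, (a < p)%N -> (b < p)%N -> a != b -> nzd (F a - F b)) ->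
  uniq s -> all (fun a => a < p)%N s -> good (map F s).
Proof.
move=> hF; elim: s => [|a s IH] //= /andP[ns us] /andP[la ls]; split; last exact: IH.
move=> r' /mapP [a' ha' ->]; apply: hF => //.
  by move/allP: ls; apply.
by apply: contraNneq ns => <-.
Qed.

Lemma good_map_poly (F : nat -> {poly S}) (s : seq nat) :
  (forall a b, (a < p)%N -> (b < p)%N -> a != b -> nzd (F a - F b)) ->
  uniq s -> all (fun a => a < p)%N s -> good (map F s).
Proof.
move=> hF; elim: s => [|a s IH] //= /andP[ns us] /andP[la ls]; split; last exact: IH.
move=> r' /mapP [a' ha' ->]; apply: hF => //.
  by move/allP: ls; apply.
by apply: contraNneq ns => <-.
Qed.

Lemma chi_nzd_lt a b : (a < p)%N -> (b < p)%N -> a != b -> nzd (chi a - chi b).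
Proof. by move=> la lb ne; apply: chi_nzd; rewrite !modn_small. Qed.

Lemma nzd_scaleX (s : S) : nzd s -> nzd (s *: 'X : {poly S}).
Proof.
move=> hs y e; apply/polyP => i; rewrite coef0; apply: hs.
have := congr1 (fun q : {poly S} => q`_i.+1) e.
by rewrite /= -scalerAl coefZ coefXM /= coef0.
Qed.

Lemma nzd_pm1 : nzd ((p.-1)%:R : S).
Proof.
have hP : Phi S p.-1 = \prod_(r <- map chi (iota 2 (p.-2))) ('X - r%:P).
  apply: factor_monic.
  - apply: good_map; first exact: chi_nzd_lt.
      exact: iota_uniq.
    by apply/allP => a; rewrite mem_iota => /andP[_]; lia.
  - move=> r /mapP [a ha ->]; apply/rootP.
    move: ha; rewrite mem_iota => /andP[a2 ap].
    have na : ~~ (p %| a)%N by rewrite gtnNdvd //; lia.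
    apply: (chi_nzd_lt (a:=a) (b:=1)); [lia | lia | lia |].
    rewrite chi1 /Phi horner_sum.
    under eq_bigr do rewrite hornerXn.
    by rewrite geom chi_pow // subrr.
  - by apply: monic_Phi; lia.
  - by rewrite size_Phi size_map size_iota; lia.
have e : (Phi S p.-1).[1] = (\prod_(r <- map chi (iota 2 (p.-2))) ('X - r%:P)).[1].
  by rewrite hP.
rewrite /Phi horner_sum horner_prod in e.
have s1 : \sum_(i < p.-1) ('X^i : {poly S}).[1] = (p.-1)%:R.
  rewrite (eq_bigr (fun _ => 1)); last by move=> i _; rewrite hornerXn expr1n.
  by rewrite sumr_const card_ord.
rewrite s1 in e.
rewrite e big_map big_seq; apply: nzd_prod => a; rewrite mem_iota hornerXsubC -chi1.
by move=> /andP[a2 ap]; apply: chi_nzd_lt; lia.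
Qed.


Lemma comp_prod (I : Type) (r : seq I) (F : I -> {poly S}) (Q : {poly S}) :
  (\prod_(i <- r) F i) \Po Q = \prod_(i <- r) (F i \Po Q).
Proof.
apply: (big_morph (fun q => q \Po Q)); first by move=> x y; rewrite comp_polyM.
by rewrite comp_polyC.
Qed.

Lemma homog (al : {poly S}) (be : S) :
  \prod_(a <- iota 1 p.-1) (al - (chi a * be)%:P) = al ^+ p.-1 - (be ^+ p.-1)%:P.
Proof.
pose P' : {poly {poly S}} := 'X^(p.-1) - ('X^(p.-1))%:P.
have hF : P' = \prod_(r <- map (fun a => chi a *: 'X) (iota 1 p.-1)) ('X - r%:P).
  apply: factor_monic.
  - apply: good_map_poly; last first.
    + by apply/allP => a; rewrite mem_iota => /andP[_]; lia.
    + exact: iota_uniq.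
    + move=> a b la lb ne; rewrite -scalerBl; apply: nzd_scaleX; exact: chi_nzd_lt.
  - move=> r /mapP [a ha ->]; apply/rootP.
    move: ha; rewrite mem_iota => /andP[a1 ap].
    have na : ~~ (p %| a)%N by rewrite gtnNdvd //; lia.
    by rewrite /P' hornerD hornerN hornerXn hornerC exprZn chi_pow // scale1r subrr.
  - by apply: monicXnsubC; lia.
  - by rewrite size_XnsubC ?size_map ?size_iota //; lia.
have := congr1 (fun Q => (map_poly (horner_eval be) Q) \Po al) hF.
rewrite /P' rmorphB /= map_polyXn map_polyC /= horner_evalE hornerXn.
rewrite comp_polyB comp_Xn_poly comp_polyC => ->.
rewrite rmorph_prod /= comp_prod big_map; apply: eq_bigr => a _.
by rewrite rmorphB /= map_polyX map_polyC /= horner_evalE hornerZ hornerX comp_polyB comp_polyX comp_polyC.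
Qed.


Definition B k : {poly S} := \sum_(a < p | (0 < a)%N) chi a ^+ k *: 'X^a.

Lemma chi_h b (a : 'I_p) : chi (hmul p_pr b a) = chi a * chi b.
Proof. by rewrite /= chi_mod chiM. Qed.

Lemma sum_chi_pow k : nzd (chi 2 ^+ k - 1) -> \sum_(a < p | (0 < a)%N) chi a ^+ k = 0.
Proof.
move=> hn; apply: hn.
have n2 : ~~ (p %| 2)%N by rewrite gtnNdvd.
have := reindex_pos p_pr (fun a : 'I_p => chi a ^+ k) n2.
under eq_bigr do rewrite chi_h exprMn.
rewrite -mulr_suml => e.
by rewrite mulrBl mul1r mulrC e subrr.
Qed.

Lemma sum_chi1 : \sum_(a < p | (0 < a)%N) chi a = 0.
Proof.
under eq_bigr do rewrite -[chi _]expr1.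
apply: sum_chi_pow; rewrite expr1 -chi1; apply: chi_nzd_lt; lia.
Qed.

Lemma sum_chi_inv : \sum_(a < p | (0 < a)%N) chi a ^+ p.-2 = 0.
Proof.
apply: sum_chi_pow; apply: (@nzd_of_mul _ _ (chi 2)).
have n2 : ~~ (p %| 2)%N by rewrite gtnNdvd.
rewrite mulrBl chi_inv // mul1r -chi1; apply: chi_nzd_lt; lia.
Qed.

Lemma orth (a b : nat) : (0 < a < p)%N -> (0 < b < p)%N -> a != b ->
  \sum_(k < p.-1) chi b ^+ (p.-2 - k) * chi a ^+ k = 0.
Proof.
move=> /andP[a0 ap] /andP[b0 bp] ne; apply: (chi_nzd_lt bp ap); first by rewrite eq_sym.
have na : ~~ (p %| a)%N by rewrite gtnNdvd.
have nb : ~~ (p %| b)%N by rewrite gtnNdvd.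
by rewrite -subrXX !chi_pow // subrr.
Qed.

Lemma sumB (b : 'I_p) : (0 < b)%N ->
  \sum_(k < p.-1) chi b ^+ (p.-1 - k) *: B k = (p.-1)%:R *: 'X^b.
Proof.
move=> b0; have nb : ~~ (p %| b)%N by rewrite gtnNdvd.
rewrite /B.
under eq_bigr do rewrite scaler_sumr.
rewrite exchange_big /=.
under eq_bigr do under eq_bigr do rewrite scalerA.
under eq_bigr do rewrite -scaler_suml.
rewrite (bigD1 b) //= [X in _ + X]big1 ?addr0.
  congr (_ *: _).
  rewrite (eq_bigr (fun _ => 1)); last by move=> i _; rewrite -exprD subnK ?chi_pow //; move: (ltn_ord i); lia.
  by rewrite sumr_const card_ord.
move=> a /andP[a0 ne].
have -> : \sum_(i < p.-1) chi b ^+ (p.-1 - i) * chi a ^+ i =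
          chi b * \sum_(k < p.-1) chi b ^+ (p.-2 - k) * chi a ^+ k.
  rewrite mulr_sumr; apply: eq_bigr => k _; rewrite mulrA -exprS; congr (_ ^+ _ * _).
  by move: (ltn_ord k); lia.
rewrite orth ?mulr0 ?scale0r // ?a0 ?b0 ?ltn_ord //.
Qed.


Lemma polyCXn (x : S) n : (x ^+ n)%:P = x%:P ^+ n.
Proof. by rewrite rmorphXn. Qed.

Lemma sigma_B k b : ~~ (p %| b)%N ->
  B k \Po 'X^b === ((chi b ^+ p.-2) ^+ k)%:P * B k.
Proof.
move=> nb; rewrite /B linear_sum /=.
apply: (@congT _ _ _ (\sum_(a < p | (0 < a)%N) chi a ^+ k *: 'X^(hmul p_pr b a))).
  apply: cong_sum => a _; rewrite linearZ /= comp_Xn_poly -exprM -!mul_polyC.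
  by apply: congMl; rewrite mulnC; exact: Xmod.
rewrite mulr_sumr.
rewrite -(reindex_pos p_pr (fun a : 'I_p => ((chi b ^+ p.-2) ^+ k)%:P * (chi a ^+ k *: ('X^a : {poly S}))) nb).
apply: congE; apply: eq_bigr => a _.
rewrite chi_h mul_polyC scalerA -exprMn; congr (_ ^+ _ *: _).
by rewrite mulrCA chi_inv // mulr1.
Qed.

Lemma sigma_prod k m b : ~~ (p %| b)%N ->
  (B k * B 1 ^+ m) \Po 'X^b === ((chi b ^+ p.-2) ^+ (k + m))%:P * (B k * B 1 ^+ m).
Proof.
move=> nb; rewrite comp_polyM comp_polyXn_gen.
apply: congT (congM (sigma_B k nb) (congX m (sigma_B 1 nb))) _.
apply: congE; rewrite !polyCXn exprMn exprD; ring.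
Qed.

Lemma lam_pow b : ~~ (p %| b)%N -> (chi b ^+ p.-2) ^+ p.-1 = 1.
Proof. by move=> nb; rewrite exprAC chi_pow // expr1n. Qed.

Lemma inv_prod k : (k <= p.-1)%N -> exists D, B k * B 1 ^+ (p.-1 - k) === D%:P.
Proof.
move=> kp; apply: invariance => // b nb.
apply: congT (sigma_prod _ _ nb) _.
by rewrite subnKC // lam_pow // mul1r; apply: congR.
Qed.

Lemma inv_pow : exists c, B 1 ^+ p.-1 === c%:P.
Proof.
case: (inv_prod (leq0n p.-1)) => D hD; exists (- D).
have h0 : B 0 === -1.
  rewrite /B; under eq_bigr do rewrite expr0 scale1r.
  exact: sum_pos_X.
rewrite subn0 in hD; rewrite polyCN.
apply: congT (congN hD); apply: (@congT _ _ _ (- (-1 * B 1 ^+ p.-1))).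
  by apply: congE; rewrite mulN1r opprK.
by apply: congN; apply: congMr; apply: congS.
Qed.


Lemma inv_y (be : S) :
  exists y, \sum_(k < p.-1) B k * B 1 ^+ (p.-1 - k) * (be ^+ k)%:P === y%:P.
Proof.
apply: (big_ind (fun P => exists d, P === d%:P)).
- by exists 0; apply: congR.
- move=> P1 P2 [d1 h1] [d2 h2]; exists (d1 + d2); rewrite polyCD; exact: congD.
- move=> k _; have kp : (k <= p.-1)%N by apply: ltnW.
  case: (inv_prod kp) => D hD; exists (D * be ^+ k); rewrite polyCM.
  exact: congMr.
Qed.

Lemma powl (al l : {poly S}) (x : S) m :
  (al - x%:P) * l === 0 -> al ^+ m * l === (x ^+ m)%:P * l.
Proof.
move=> h; have h1 : al * l === x%:P * l.
  apply: (@congT _ _ _ ((al - x%:P) * l + x%:P * l)).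
    by apply: congE; rewrite mulrBl subrK.
  by rewrite -[X in _ === X]add0r; apply: congD => //; apply: congR.
elim: m => [|m IH]; first by rewrite !expr0 mul1r; apply: congR.
rewrite exprS -mulrA; apply: congT (congMl _ IH) _.
rewrite mulrCA; apply: congT (congMl _ h1) _.
by apply: congE; rewrite exprS polyCM polyCXn; ring.
Qed.

Lemma core (c be y : S) (b : 'I_p) (l : {poly S}) : (0 < b)%N ->
  be ^+ p.-1 = c ->
  \sum_(k < p.-1) B k * B 1 ^+ (p.-1 - k) * (be ^+ k)%:P === y%:P ->
  (B 1 - (chi b * be)%:P) * l === 0 ->
  y%:P * l === (c * (p.-1)%:R)%:P * 'X^b * l.
Proof.
move=> b0 hc hy hl.
apply: congT (congMr _ (congS hy)) _.
rewrite mulr_suml.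
apply: (@congT _ _ _ (\sum_(k < p.-1) (c * chi b ^+ (p.-1 - k))%:P * B k * l)).
  apply: cong_sum => k _.
  apply: (@congT _ _ _ (B k * (be ^+ k)%:P * (B 1 ^+ (p.-1 - k) * l))).
    by apply: congE; ring.
  apply: congT (congMl _ (powl _ hl)) _.
  have ek : be ^+ p.-1 = be ^+ k * be ^+ (p.-1 - k) by rewrite -exprD subnKC // ltnW.
  apply: congE; rewrite -hc ek exprMn !polyCM !polyCXn; ring.
apply: congE; rewrite -mulr_suml.
under eq_bigr do rewrite polyCM -mulrA !mul_polyC.
by rewrite -scaler_sumr sumB // scalerA -mul_polyC.
Qed.


Lemma Xbp b : ('X^(b * p) : {poly S}) === 1.
Proof. by rewrite mulnC exprM -(expr1n _ b); apply: congX; apply: Xp1. Qed.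

Lemma stepDelta (y W : S) (b : nat) (l : {poly S}) :
  y%:P * l === W%:P * 'X^b * l -> (y ^+ p - W ^+ p)%:P * l === 0.
Proof.
move=> h.
have hn : forall n, (y ^+ n)%:P * l === (W ^+ n)%:P * 'X^(b * n) * l.
  elim=> [|n IH]; first by rewrite !expr0 muln0 expr0 mulr1; apply: congR.
  rewrite exprS polyCM -mulrA; apply: congT (congMl _ IH) _.
  apply: (@congT _ _ _ ((W ^+ n)%:P * 'X^(b * n) * (y%:P * l))).
    by apply: congE; ring.
  apply: congT (congMl _ h) _; apply: congE.
  by rewrite exprS polyCM mulnS exprD; ring.
rewrite polyCB mulrBl; apply: (@congT _ _ _ ((W ^+ p)%:P * 'X^(b * p) * l - (W ^+ p)%:P * l)).
  by apply: congB => //; apply: congR.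
rewrite -(subrr ((W ^+ p)%:P * l)); apply: congB; last exact: congR.
apply: congMr; rewrite -[X in _ === X]mulr1; apply: congMl; exact: Xbp.
Qed.

Lemma peel (al : {poly S}) (F : nat -> S) (s : seq nat) (e : S) :
  (forall i l, i \in s -> (al - (F i)%:P) * l === 0 -> e%:P * l === 0) ->
  forall l, (\prod_(i <- s) (al - (F i)%:P)) * l === 0 -> (e ^+ size s)%:P * l === 0.
Proof.
elim: s => [|i s IH] hs l /=.
  by rewrite big_nil => h; rewrite ?expr0 mul1r; rewrite mul1r in h.
rewrite big_cons -mulrA => h.
have h1 := hs i _ (mem_head i s) h.
have h2 : (\prod_(j <- s) (al - (F j)%:P)) * (e%:P * l) === 0.
  by apply: congT h1; apply: congE; ring.
have := IH (fun j l' hj => hs j l' (introT orP (or_intror hj))) _ h2.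
by move=> h3; apply: congT _ h3; apply: congE; rewrite exprS polyCM; ring.
Qed.


Lemma stepC (c be W : S) (b : 'I_p) (l : {poly S}) : (0 < b)%N ->
  be ^+ p.-1 = c ->
  (B 1 - (chi b * be)%:P) * l === 0 ->
  W%:P * l === W%:P * 'X^b * l ->
  (c * W)%:P * l === 0.
Proof.
move=> b0 hc hl h.
have nb : ~~ (p %| b)%N by rewrite gtnNdvd.
set m := W%:P * l.
have hm : 'X^b * m === m.
  by apply: congT (congS h); apply: congE; rewrite /m; ring.
have hmj : forall j, 'X^(b * j) * m === m.
  elim=> [|j IH]; first by rewrite muln0 expr0 mul1r; apply: congR.
  rewrite mulnS exprD -mulrA; apply: congT (congMl _ IH) hm.
have [g hg gh] := injF_bij (@hmul_inj p p_pr b nb).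
pose one : 'I_p := Ordinal p_gt1.
have e1 : ((g one) * b %% p = 1)%N by have := congr1 val (gh one).
have hX : 'X * m === m.
  apply: congT (hmj (g one)); apply: congMr.
  have e2 : ((b * g one) %% p = 1)%N by rewrite mulnC.
  have := @Xmod S p (b * g one); rewrite e2 expr1; exact: congS.
have hXa : forall a, 'X^a * m === m.
  elim=> [|a IH]; first by rewrite expr0 mul1r; apply: congR.
  rewrite exprS -mulrA; apply: congT (congMl _ IH) hX.
have hB : B 1 * m === 0.
  rewrite /B mulr_suml.
  apply: (@congT _ _ _ (\sum_(a < p | (0 < a)%N) (chi a)%:P * m)).
    apply: cong_sum => a _; rewrite expr1 -mul_polyC -mulrA; exact: congMl.
  by rewrite -mulr_suml -rmorph_sum /= sum_chi1 mul0r; apply: congR.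
have hB2 : B 1 * m === (chi b * be)%:P * m.
  have := powl 1 hl; rewrite !expr1 => h1.
  by apply: (@congT _ _ _ (W%:P * (B 1 * l))); [apply: congE; rewrite /m; ring|]; apply: congT (congMl _ h1) _; apply: congE; rewrite /m; ring.
have h3 : (chi b * be)%:P * m === 0 by apply: congT (congS hB2) hB.
have h4 := congMl ((chi b ^+ p.-2 * be ^+ p.-2)%:P) h3.
apply: congT _ (congT h4 _); last by rewrite mulr0; apply: congR.
apply: congE; rewrite /m -hc.
have -> : be ^+ p.-1 = be ^+ p.-2 * be by rewrite -exprSr; congr (_ ^+ _); lia.
have ci := chi_inv nb.
have -> : (chi b ^+ p.-2 * be ^+ p.-2)%:P * ((chi b * be)%:P * (W%:P * l)) =
          ((chi b ^+ p.-2 * chi b) * (be ^+ p.-2 * be * W))%:P * l.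
  by rewrite !polyCM; ring.
by rewrite ci mul1r.
Qed.


Lemma sum_pos_one : \sum_(a < p | (0 < a)%N) (1 : S) = (p.-1)%:R.
Proof.
have : \sum_(i < p) (1 : S) = 1 + \sum_(i < p | i != Ordinal p_gt0) 1.
  by rewrite (bigD1 (Ordinal p_gt0)).
rewrite sumr_const card_ord /=.
have -> : \sum_(i < p | i != Ordinal p_gt0) (1 : S) = \sum_(a < p | (0 < a)%N) 1.
  apply: eq_bigl => a; rewrite lt0n; congr negb.
have -> : p = p.-1.+1 by lia.
by rewrite mulrS => /addrI <-.
Qed.

Lemma step2 (t : 'I_p) : (0 < t)%N ->
  \sum_(a < p | (0 < a)%N) ('X^(t.+1 * a) : {poly S}) ===
  (if t.+1 == p then ((p.-1)%:R)%:P else -1).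
Proof.
move=> t0; case: eqP => [tp|tp].
  apply: (@congT _ _ _ (\sum_(a < p | (0 < a)%N) (1 : {poly S}))).
    by apply: cong_sum => a _; rewrite tp mulnC; exact: Xbp.
  by rewrite -polyC1 -rmorph_sum /= sum_pos_one; apply: congR.
have nb : ~~ (p %| t.+1)%N by rewrite gtnNdvd //; move: (ltn_ord t) tp; lia.
apply: (@congT _ _ _ (\sum_(a < p | (0 < a)%N) ('X^(hmul p_pr t.+1 a) : {poly S}))).
  by apply: cong_sum => a _; rewrite /= mulnC; exact: Xmod.
rewrite (reindex_pos p_pr (fun a : 'I_p => ('X^a : {poly S})) nb).
exact: sum_pos_X.
Qed.

Lemma gauss : B 1 * B p.-2 === (p%:R * chi p.-1 ^+ p.-2)%:P.
Proof.
have step1 : B 1 * B p.-2 === \sum_(t < p | (0 < t)%N)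
    (chi t ^+ p.-2)%:P * \sum_(a < p | (0 < a)%N) ('X^(t.+1 * a) : {poly S}).
  rewrite {1}/B mulr_suml.
  apply: (@congT _ _ _ (\sum_(a < p | (0 < a)%N) \sum_(t < p | (0 < t)%N)
       (chi t ^+ p.-2)%:P * ('X^(t.+1 * a) : {poly S}))).
    apply: cong_sum => a a0.
    have na : ~~ (p %| a)%N by rewrite gtnNdvd.
    rewrite /B mulr_sumr.
    rewrite -(reindex_pos p_pr (fun t : 'I_p => (chi a ^+ 1 *: 'X^a) * (chi t ^+ p.-2 *: ('X^t : {poly S}))) na).
    apply: cong_sum => t t0.
    rewrite chi_h -!mul_polyC.
    have -> : (chi a ^+ 1)%:P * 'X^a * (((chi t * chi a) ^+ p.-2)%:P * 'X^(hmul p_pr a t)) =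
        (chi t ^+ p.-2 * (chi a ^+ p.-2 * chi a))%:P * ('X^(a + hmul p_pr a t) : {poly S}).
      by rewrite exprD expr1 exprMn !polyCM; ring.
    rewrite chi_inv // mulr1; apply: congMl.
    apply: congT (@Xmod S p _) _; apply: congS; apply: congT (@Xmod S p _) _; apply: congE.
    by rewrite /= modnDmr mulSn.
  rewrite exchange_big /=; apply: congE; apply: eq_bigr => t _; by rewrite mulr_sumr.
apply: congT step1 _.
have tp : (p.-1 < p)%N by lia.
pose t1 : 'I_p := Ordinal tp.
apply: (@congT _ _ _ (\sum_(t < p | (0 < t)%N) (chi t ^+ p.-2)%:P *
    (if t.+1 == p then ((p.-1)%:R)%:P else -1))).
  by apply: cong_sum => t t0; apply: congMl; apply: step2.
apply: congE.
rewrite (bigD1 t1) /=; last by lia.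
have -> : p.-1.+1 == p by apply/eqP; lia.
have -> : \sum_(t < p | (0 < t)%N && (t != t1)) (chi t ^+ p.-2)%:P *
    (if t.+1 == p then ((p.-1)%:R)%:P else -1) =
    \sum_(t < p | (0 < t)%N && (t != t1)) - (chi t ^+ p.-2)%:P.
  apply: eq_bigr => t /andP[t0 ne]; have -> : (t.+1 == p) = false.
    apply/negbTE; apply: contra ne => /eqP e; apply/eqP/val_inj => /=; lia.
  by rewrite mulrN1.
rewrite sumrN -rmorph_sum /=.
have hs := sum_chi_inv; rewrite (bigD1 t1) /= in hs; last by lia.
have -> : \sum_(i < p | (0 < i)%N && (i != t1)) chi i ^+ p.-2 = - chi p.-1 ^+ p.-2.
  by apply/eqP; rewrite -addr_eq0 addrC; apply/eqP.
rewrite polyCN opprK -polyCM -polyCD; congr (_%:P).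
have -> : (p%:R : S) = (p.-1)%:R + 1 by rewrite natr1 prednK.
ring.
Qed.


Lemma iota_ord i : i \in iota 1 p.-1 -> { b : 'I_p | (0 < b)%N & nat_of_ord b = i }.
Proof.
rewrite mem_iota => /andP[i1 ip].
have ilt : (i < p)%N by lia.
by exists (Ordinal ilt).
Qed.

Lemma main_char : p%:R = 0 :> S.
Proof.
case: inv_pow => c hc.
case: (radical c) => be hbe.
case: (inv_y be) => y hy.
pose F := fun a => chi a * be.
have hprod : (\prod_(a <- iota 1 p.-1) (B 1 - (F a)%:P)) * 1 === 0.
  rewrite mulr1 homog hbe -(subrr (c%:P)); apply: congB => //; exact: congR.
pose W := c * (p.-1)%:R.
have hcore : forall i l, i \in iota 1 p.-1 -> (B 1 - (F i)%:P) * l === 0 ->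
    y%:P * l === W%:P * 'X^i * l.
  move=> i l hi hl; case: (iota_ord hi) => b b0 eb; subst i.
  exact: core b0 hbe hy hl.
have hD : (y ^+ p - W ^+ p) = 0.
  have := peel (fun i l hi hl => stepDelta (hcore i l hi hl)) hprod.
  rewrite mulr1 => /(cong_const0 p_gt1); exact: reduced.
have yW : y = W by apply: uroot; apply/eqP; rewrite -subr_eq0 hD.
have hcW : c * W = 0.
  have hstep : forall i l, i \in iota 1 p.-1 -> (B 1 - (F i)%:P) * l === 0 ->
      (c * W)%:P * l === 0.
    move=> i l hi hl; have h := hcore i l hi hl; rewrite yW in h.
    case: (iota_ord hi) => b b0 eb; rewrite -eb in hl h.
    exact: stepC b0 hbe hl h.
  have := peel hstep hprod.
  rewrite mulr1 => /(cong_const0 p_gt1); exact: reduced.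
have c0 : c = 0.
  apply: (@reduced c 2); rewrite expr2; apply: nzd_pm1.
  by rewrite -hcW /W; ring.
pose L := chi p.-1 ^+ p.-2.
have np1 : ~~ (p %| p.-1)%N by rewrite gtnNdvd //; lia.
have hg := congX p.-1 gauss.
have h0 : (B 1 * B p.-2) ^+ p.-1 === 0.
  rewrite exprMn; apply: congT (congMr _ hc) _.
  by rewrite c0 mul0r; apply: congR.
have hpL : (p%:R * L) ^+ p.-1 = 0.
  apply: (cong_const0 p_gt1); rewrite polyCXn; apply: congT (congS hg) h0.
have pL0 := reduced hpL.
have := congr1 (fun z => z * chi p.-1) pL0; rewrite /L /= mul0r -mulrA chi_inv // mulr1; exact.
Qed.

End Main.

End MD.
Import MD.

Module ME.
Set Implicit Arguments. Unset Strict Implicit. Unset Printing Implicit Defensive.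

Section Transfer.
Variables (R S : comNzRingType) (f : R -> S) (g : S -> R).
Hypothesis fK : cancel f g.
Hypothesis gK : cancel g f.
Hypothesis f1 : f 1 = 1.
Hypothesis fM : forall x y, f (x * y) = f x * f y.

Lemma f0 : f 0 = 0.
Proof. by have := fM 0 (g 0); rewrite mul0r gK mulr0. Qed.

Lemma fX x n : f (x ^+ n) = f x ^+ n.
Proof. by elim: n => [|n IH]; rewrite ?expr0 ?f1 // !exprS fM IH. Qed.

Lemma gM x y : g (x * y) = g x * g y.
Proof. by apply: (can_inj fK); rewrite fM !gK. Qed.

Lemma gX x n : g (x ^+ n) = g x ^+ n.
Proof. by apply: (can_inj fK); rewrite fX !gK. Qed.

Lemma f_inj : injective f.
Proof. exact: can_inj fK. Qed.

Lemma nzd_transfer (r1 r2 u : R) : (r1 - r2) * u = 1 -> nzd (f r1 - f r2).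
Proof.
move=> hu s; rewrite mulrBl => /eqP; rewrite subr_eq0 => /eqP e.
have : f (r1 * g s) = f (r2 * g s) by rewrite !fM gK.
move/f_inj => e2.
have : (r1 - r2) * g s = 0 by rewrite mulrBl e2 subrr.
move=> e3; rewrite -(gK s); have -> : g s = 0.
  by rewrite -[g s]mul1r -hu mulrAC e3 mul0r.
exact: f0.
Qed.
End Transfer.


End ME.
Import ME.

Theorem lemma1p5p6 (p : nat) (K : closedFieldType) (R : comAlgType K)
  (S : comNzRingType) (f : R -> S) :
  is_alg_closure_Fp p K ->
  perfect_ring p R ->
  radically_closed R ->
  mul_monoid_iso f ->
  p \in [pchar S].
Proof.
case=> pp [pK _] perf rad [fbij f1 fM].
have [g fK gK] := fbij.
have pR : p \in [pchar R] by rewrite (pchar_lalg R).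
have p_gt1 : (1 < p)%N := prime_gt1 pp.
have uroot : forall x y : S, x ^+ p = y ^+ p -> x = y.
  move=> x y e; rewrite -(gK x) -(gK y); congr f.
  by apply: (bij_inj perf) => /=; rewrite -!(gX fK gK f1 fM) e.
have [p2|p_gt2] := leqP p 2.
  have ep : p = 2%N by lia.
  rewrite inE pp /= ep; apply/eqP.
  have : (-1 : S) = 1 by apply: uroot; rewrite ep expr2 mulrNN mul1r expr1n.
  by move=> h; rewrite -[2%:R]/(1 + 1) -{1}h addNr.
pose chi := fun a : nat => f (a%:R).
have natK : forall a : nat, (a%:R : R) = (a%:R : K) *: 1 by move=> a; rewrite scaler_nat.
have unitK : forall a : nat, ~~ (p %| a)%N -> (a%:R : R) * ((a%:R : K)^-1 *: 1) = 1.
  move=> a na; rewrite natK -scalerAl mul1r scalerA mulrC mulVf ?scale1r //.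
  by rewrite -(dvdn_pcharf pK).
have main := @main_char S p chi pp p_gt2.
rewrite inE pp /=; apply/eqP; apply: main.
- by move=> a b; rewrite /chi natrM fM.
- by move=> a; rewrite /chi (GRing.natr_mod_pchar pR).
- by rewrite /chi f1.
- move=> a na; rewrite /chi -fX //.
  have hF : (a%:R : R) ^+ p = a%:R by have := GRing.pFrobenius_aut_nat pR a.
  have -> : (a%:R : R) ^+ p.-1 = 1.
    have hu := unitK a na.
    have -> : (a%:R : R) ^+ p.-1 = (a%:R : R) ^+ p.-1 * ((a%:R : R) * ((a%:R : K)^-1 *: 1)).
      by rewrite hu mulr1.
    by rewrite mulrA -exprSr prednK ?prime_gt0 // hF.
  exact: f1.
- move=> a b ne; rewrite /chi.
  apply: (@nzd_transfer R S f g fK gK fM (a%:R) (b%:R) ((a%:R - b%:R : K)^-1 *: (1 : R))).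
  have hab : (a%:R - b%:R : K) != 0.
    rewrite -(GRing.natr_mod_pchar pK a) -(GRing.natr_mod_pchar pK b) subr_eq0.
    apply: contra ne => /eqP e.
    have [le|lt] := leqP (b %% p) (a %% p).
      have : ((a %% p - b %% p)%N%:R : K) = 0 by rewrite natrB // e subrr.
      move/eqP; rewrite -(dvdn_pcharf pK) => dv.
      have lt : (a %% p - b %% p < p)%N.
        by apply: leq_ltn_trans (leq_subr _ _) (ltn_pmod _ (prime_gt0 pp)).
      have [z|nz] := eqVneq (a %% p - b %% p)%N 0%N.
        by apply/eqP; move: z le; lia.
      by move: dv; rewrite gtnNdvd // lt0n.
    have : ((b %% p - a %% p)%N%:R : K) = 0 by rewrite natrB ?e ?subrr // ltnW.
    move/eqP; rewrite -(dvdn_pcharf pK) => dv.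
    have lt2 : (b %% p - a %% p < p)%N.
      by apply: leq_ltn_trans (leq_subr _ _) (ltn_pmod _ (prime_gt0 pp)).
    have [z|nz] := eqVneq (b %% p - a %% p)%N 0%N; first by move: z lt; lia.
    by move: dv; rewrite gtnNdvd // lt0n.
  rewrite (natK a) (natK b) -scalerBl -scalerAl mul1r scalerA mulfV // scale1r //=.
- exact: uroot.
- move=> c.
  have n0 : (0 < p.-1)%N by lia.
  case: (rad p.-1 (g c) n0) => s es.
  case: s es => [|r s] es.
    have := congr1 (fun P : {poly R} => size P) es; rewrite big_nil size_XnsubC // size_poly1. lia.
  exists (f r); rewrite -(fX f1 fM).
  have := congr1 (fun P : {poly R} => P.[r]) es.
  rewrite /= big_cons hornerM hornerXsubC subrr mul0r hornerD hornerN hornerXn hornerC.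
  by move/eqP; rewrite subr_eq0 => /eqP ->; rewrite gK.
Qed.
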